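(* Let $\nu\ge3$ be a square-free integer with $\nu\equiv2$ or $3\pmod 4$, and for $n\ge1$ let $P_n(t)=(t^2-\nu)^{\circ n}\in\mathbb{Z}[t]$ (the $n$-fold composition of $t^2-\nu$). Write $C_n$ for the constant term of $P_n$ and $D_n$ for the coefficient of $t^2$ in $P_n$. For an integer $k$, let $s(k)$ be the set of primes dividing $k$. Then for every $n\ge2$, $\bigcup_{1\le k\le n} s(C_k)= s(D_{n+1})$. *)

(* Defs.v *)
From mathcomp Require Import all_boot all_order all_algebra.
Set Implicit Arguments. Unset Strict Implicit. Unset Printing Implicit Defensive.
Import GRing.Theory Num.Theory.
Local Open Scope ring_scope.

Definition squarefree (z : int) : Prop :=
  forall p : nat, prime p -> ~ (p ^ 2 %| `|z|)%N.

Definition Piter (nu : int) (n : nat) : {poly int} :=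
  iter n (fun p => ('X ^+ 2 - nu%:P) \Po p) 'X.

Definition Ccoef (nu : int) (n : nat) : int := (Piter nu n)`_0.
Definition Dcoef (nu : int) (n : nat) : int := (Piter nu n)`_2.

Definition in_s (k : int) (p : nat) : Prop := prime p /\ (p %| `|k|)%N.

(* Main.v *)
Require Import Defs.
From mathcomp Require Import all_boot all_order all_algebra.
From mathcomp Require Import ring.
Import GRing.Theory Num.Theory.
Local Open Scope ring_scope.

Lemma PS nu n : Piter nu n.+1 = Piter nu n ^+ 2 - nu%:P.
Proof. by rewrite /Piter iterS comp_polyB comp_Xn_poly comp_polyC. Qed.

Lemma coefsq (p : {poly int}) :
  [/\ (p ^+ 2)`_0 = p`_0 * p`_0, (p ^+ 2)`_1 = 2 * p`_0 * p`_1 &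
      (p ^+ 2)`_2 = 2 * p`_0 * p`_2 + p`_1 * p`_1].
Proof.
rewrite expr2 !coefM !big_ord_recr !big_ord0 /=; split; ring.
Qed.

Lemma recs nu n :
  [/\ Ccoef nu n.+1 = Ccoef nu n * Ccoef nu n - nu,
      (Piter nu n.+1)`_1 = 2 * Ccoef nu n * (Piter nu n)`_1 &
      Dcoef nu n.+1 = 2 * Ccoef nu n * Dcoef nu n + (Piter nu n)`_1 * (Piter nu n)`_1].
Proof.
rewrite /Ccoef /Dcoef PS !coefB !coefC /=.
have [-> -> ->] := coefsq (Piter nu n).
by split; rewrite ?subr0.
Qed.

Lemma C0 nu : Ccoef nu 0 = 0. Proof. by rewrite /Ccoef /Piter /= coefX. Qed.

Lemma L0 nu n : (Piter nu n.+1)`_1 = 0.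
Proof.
elim: n => [|n IH].
  by have [_ -> _] := recs nu 0; rewrite C0 mulr0 mul0r.
by have [_ -> _] := recs nu n.+1; rewrite IH mulr0.
Qed.

Lemma D1 nu : Dcoef nu 1 = 1.
Proof. have [_ _ ->] := recs nu 0. by rewrite C0 /Piter /= coefX mulr0 mul0r add0r. Qed.

Lemma D2 nu n : Dcoef nu n.+2 = 2 * Ccoef nu n.+1 * Dcoef nu n.+1.
Proof. have [_ _ ->] := recs nu n.+1. by rewrite L0 mulr0 addr0. Qed.

Lemma Q nu n p : prime p ->
  (p %| `|Dcoef nu n.+1|)%N <->
  (((0 < n)%N /\ p = 2%N) \/ exists k, [/\ (1 <= k)%N, (k <= n)%N & (p %| `|Ccoef nu k|)%N]).
Proof.
move=> pp; elim: n => [|n IH].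
  rewrite D1 /= dvdn1; split; first by move=> /eqP p1; rewrite p1 in pp.
  by case=> [[]|[k [k1 k0 _]]] //; move: (leq_trans k1 k0).
rewrite D2 !abszM !Euclid_dvdM //.
have p2 : (p %| `|2%:Z|)%N <-> p = 2%N.
  split; last by move->.
  move=> h; have := dvdn_leq (isT : (0 < 2)%N) h; have := prime_gt1 pp.
  by clear IH; case: p {pp h} => [|[|[|]]].
split.
  case/orP; first case/orP.
  - by move/p2 => ->; left.
  - by move=> h; right; exists n.+1.
  move/IH => [[_ ->]|[k [k1 kn h]]]; first by left.
  by right; exists k; split => //; apply: leqW.
case=> [[_ /p2 ->]|[k [k1 kn h]]]; first by [].

move: kn; rewrite leq_eqVlt => /orP [/eqP ek|kn].
  by rewrite -ek h orbT.
apply/orP; right; apply/IH; right; exists k; by split.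
Qed.

Lemma C2even nu : 3 <= nu -> (2 %| `|Ccoef nu 2|)%N.
Proof.
move=> h.
have [_ _ _] := recs nu 0.
have e1 : Ccoef nu 1 = - nu by have [-> _ _] := recs nu 0; rewrite C0 mulr0 sub0r.
have [-> _ _] := recs nu 1; rewrite e1.
case: nu h {e1} => [m|m] //= h.
case: m h => [|k] h //.
have -> : - Posz k.+1 * - Posz k.+1 - Posz k.+1 = Posz (k.+1 * k)%N.
  by rewrite PoszM -addn1 PoszD; ring.
by rewrite absz_nat dvdn2 oddM /= andNb.
Qed.

Theorem lemma4p5 (nu : int) (hnu3 : 3 <= nu) (hsf : squarefree nu)
  (hmod : ((nu %% 4)%Z = 2) \/ ((nu %% 4)%Z = 3))
  (n : nat) (hn : (2 <= n)%N) :
  forall p : nat,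
    (exists k : nat, [/\ (1 <= k)%N, (k <= n)%N & in_s (Ccoef nu k) p])
    <-> in_s (Dcoef nu n.+1) p.
Proof.
move=> p; split.
  case=> k [k1 kn [pp h]]; split => //; apply/(Q nu n p pp); right; by exists k.
case=> pp /(Q nu n p pp) [[_ ->]|[k [k1 kn h]]].
  exists 2%N; split => //; split => //; exact: C2even.
by exists k.
Qed.
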